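(* Let $f:[0,\infty)\to[0,\infty)$ be continuously differentiable with $f>0$ on $[t_0,\infty)$ for some $t_0\ge0$ and $f\in C^2([t_0,\infty))$, let $g=\log f$ on $[t_0,\infty)$, and assume condition (H1) of the context with $q=1$. Let $(t_n),(x_n)\subset(0,\infty)$ and $x_0\in[0,\infty)$ satisfy $t_n\to\infty$ and $x_n\to x_0$. Then $$\lim_{n\to\infty}\frac{g\big(t_n-x_n\frac{g(t_n)}{g'(t_n)}\big)}{g(t_n)}=e^{-x_0}=\lim_{n\to\infty}\frac{g'\big(t_n-x_n\frac{g(t_n)}{g'(t_n)}\big)}{g'(t_n)}.$$
   Context: Condition (H1): (i) $g'(t)>0$ and $g''(t)>0$ for all $t\ge t_0$, and there is a pair $(q,p)$ with either $q=1$ and $p\in(0,\infty]$, or $q\in(1,\infty)$ and $p\in(0,\infty)$, such that $\lim_{t\to\infty}\frac{g'(t)^2}{g(t)g''(t)}=q$ and $\lim_{t\to\infty}\frac{tg'(t)}{g(t)}=p$; (ii) if $q=1$, then $tg'(t)/g(t)$ is nondecreasing on $[t_0,\infty)$ and there exist $k\in\mathbb{N}$ and $\hat g\in C^2([t_0,\infty))$ with $f=\exp_k\circ\hat g$ and $\hat g'/\hat g$ nonincreasing on $[t_0,\infty)$ ($\exp_1=\exp$, $\exp_k=\exp_{k-1}\circ\exp$). *)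

(* Defs.v *)
From Stdlib Require Import Reals.
From Coquelicot Require Import Coquelicot.
Open Scope R_scope.

Definition deriv_Ici (a : R) (f f' : R -> R) : Prop :=
  forall t, a <= t ->
    filterlim (fun h => (f (t + h) - f t) / h)
      (within (fun h => h <> 0 /\ a <= t + h) (locally 0))
      (locally (f' t)).

Definition cont_Ici (a : R) (f : R -> R) : Prop :=
  forall t, a <= t ->
    filterlim f (within (fun s => a <= s) (locally t)) (locally (f t)).

Fixpoint exp_iter (k : nat) (x : R) : R :=
  match k with
  | O => x
  | S k' => exp_iter k' (exp x)
  end.

(* Main.v *)
Require Import Defs.
From Stdlib Require Import Reals Lra.
From Coquelicot Require Import Coquelicot.
Open Scope R_scope.

Lemma cont_of_der F x l : is_derive F x l -> continuity_pt F x.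
Proof.
  intros H. apply continuity_pt_filterlim.
  apply (ex_derive_continuous F x). exists l. exact H.
Qed.
Lemma is_derive_ln_comp G g u : is_derive G u g -> 0 < G u ->
  is_derive (fun y => ln (G y)) u (g * / G u).
Proof.
  intros H HG.
  assert (Hl : is_derive ln (G u) (/ G u)).
  { apply is_derive_Reals. apply derivable_pt_lim_ln. exact HG. }
  exact (is_derive_comp ln G u _ _ Hl H).
Qed.

Lemma mvt_h t0 (G g1 g2 : R -> R)
  (HG : forall u, t0 < u -> is_derive G u (g1 u))
  (Hg : forall u, t0 < u -> is_derive g1 u (g2 u))
  (Hg1pos : forall t, t0 <= t -> 0 < g1 t)
  M eps : t0 < M -> (forall u, M <= u -> Rabs (1 - G u * g2 u / g1 u ^ 2) <= eps) ->
  forall a b, M <= a <= b -> Rabs (G b / g1 b - G a / g1 a) <= eps * (b - a).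
Proof.
  intros HM Hb a b Hab.
  assert (Hd : forall u, M <= u -> is_derive (fun y => G y / g1 y) u
             ((g1 u * g1 u - G u * g2 u) / g1 u ^ 2)).
  { intros u Hu. apply is_derive_div; try (apply HG || apply Hg; lra).
    apply Rgt_not_eq, Hg1pos; lra. }
  destruct (MVT_gen (fun y => G y / g1 y) a b (fun u => (g1 u * g1 u - G u * g2 u) / g1 u ^ 2))
    as [c [Hc He]].
  - intros u Hu. rewrite Rmin_left in Hu by lra. apply Hd; lra.
  - intros u Hu. rewrite Rmin_left in Hu by lra. eapply cont_of_der. apply Hd; lra.
  - rewrite Rmin_left in Hc by lra. rewrite Rmax_right in Hc by lra.
    cbv beta in He. rewrite He.
    assert (Hg1c : 0 < g1 c) by (apply Hg1pos; lra).
    replace ((g1 c * g1 c - G c * g2 c) / g1 c ^ 2) with (1 - G c * g2 c / g1 c ^ 2)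
      by (field; lra).
    rewrite Rabs_mult, (Rabs_pos_eq (b - a)) by lra.
    apply Rmult_le_compat_r; [lra|]. apply Hb; lra.
Qed.

Lemma mvt_lnG t0 (G g1 : R -> R)
  (HG : forall u, t0 < u -> is_derive G u (g1 u))
  (Hg1pos : forall t, t0 <= t -> 0 < g1 t)
  M : t0 < M -> (forall u, M <= u -> 0 < G u) ->
  forall a b, M <= a <= b -> exists c, a <= c <= b /\
     ln (G b) - ln (G a) = (b - a) / (G c / g1 c).
Proof.
  intros HM Hp a b Hab.
  assert (Hd : forall u, M <= u -> is_derive (fun y => ln (G y)) u (g1 u * / G u)).
  { intros u Hu. apply is_derive_ln_comp; [apply HG; lra| apply Hp; lra]. }
  destruct (MVT_gen (fun y => ln (G y)) a b (fun u => g1 u * / G u)) as [c [Hc He]].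
  - intros u Hu. rewrite Rmin_left in Hu by lra. apply Hd; lra.
  - intros u Hu. rewrite Rmin_left in Hu by lra. eapply cont_of_der. apply Hd; lra.
  - rewrite Rmin_left in Hc by lra. rewrite Rmax_right in Hc by lra.
    exists c. split; [exact Hc|]. cbv beta in He. rewrite He.
    assert (0 < g1 c) by (apply Hg1pos; lra).
    assert (0 < G c) by (apply Hp; lra).
    field. lra.
Qed.
Lemma ev_bounds t0 (G g1 g2 : R -> R)
  (Hg1pos : forall t, t0 <= t -> 0 < g1 t)
  (Hg2pos : forall t, t0 <= t -> 0 < g2 t)
  (Hq : is_lim (fun t => g1 t ^ 2 / (G t * g2 t)) p_infty 1)
  eps : 0 < eps -> exists M, t0 < M /\ forall u, M <= u ->
     0 < G u /\ Rabs (1 - G u * g2 u / g1 u ^ 2) <= eps.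
Proof.
  intros Heps.
  apply is_lim_spec in Hq.
  assert (Hd : 0 < Rmin (1/2) (eps/2)) by (apply Rmin_pos; lra).
  destruct (Hq (mkposreal _ Hd)) as [M0 HM0]. simpl in HM0.
  exists (Rmax M0 t0 + 1). split.
  { pose proof (Rmax_r M0 t0). lra. }
  intros u Hu.
  assert (Hu0 : M0 < u) by (pose proof (Rmax_l M0 t0); lra).
  assert (Hut : t0 <= u) by (pose proof (Rmax_r M0 t0); lra).
  specialize (HM0 u Hu0).
  pose proof (Hg1pos u Hut) as Ha. pose proof (Hg2pos u Hut) as Hb.
  set (a := g1 u ^ 2) in *. set (b := G u * g2 u) in *.
  assert (Ha2 : 0 < a) by (unfold a; nra).
  assert (Hr : Rabs (a / b - 1) < 1/2 /\ Rabs (a/b - 1) < eps/2).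
  { split; eapply Rlt_le_trans; try exact HM0; [apply Rmin_l | apply Rmin_r]. }
  destruct Hr as [Hr1 Hr2].
  apply Rabs_def2 in Hr1.
  assert (HGb : 0 < b).
  { destruct (Rtotal_order b 0) as [Hn|[Hz|Hp]].
    - exfalso. assert (a / b < 0).
      { unfold Rdiv. assert (/ b < 0) by (apply Rinv_lt_0_compat; lra). nra. }
      lra.
    - exfalso. rewrite Hz in Hr1. unfold Rdiv in Hr1. rewrite Rinv_0, Rmult_0_r in Hr1. lra.
    - exact Hp. }
  split.
  { destruct (Rle_or_lt (G u) 0) as [HG|HG]; [|exact HG].
    exfalso. unfold b in HGb. nra. }
  fold b.
  replace (1 - b / a) with ((a / b - 1) * (b / a)) by (field; lra).
  rewrite Rabs_mult. rewrite (Rabs_pos_eq (b / a)).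
  2:{ apply Rlt_le, Rdiv_lt_0_compat; lra. }
  assert (b / a < 2).
  { assert (a / b * (b / a) = 1) by (field; lra).
    assert (0 < b / a) by (apply Rdiv_lt_0_compat; lra). nra. }
  assert (0 <= Rabs (a / b - 1)) by apply Rabs_pos.
  nra.
Qed.

Lemma Rabs_def2b' a b : Rabs a <= b -> - b <= a <= b.
Proof. intros H. split; [pose proof (Rle_abs (-a)); rewrite Rabs_Ropp in *|pose proof (Rle_abs a)]; lra. Qed.

Lemma key t0 (G g1 g2 : R -> R) (Ht0 : 0 <= t0)
  (HG : forall u, t0 < u -> is_derive G u (g1 u))
  (Hg : forall u, t0 < u -> is_derive g1 u (g2 u))
  (Hg1pos : forall t, t0 <= t -> 0 < g1 t)
  (Hg2pos : forall t, t0 <= t -> 0 < g2 t)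
  (Hq : is_lim (fun t => g1 t ^ 2 / (G t * g2 t)) p_infty 1)
  (t x : nat -> R) X (HX : 0 < X) (Hxpos : forall n, 0 < x n)
  (HxX : eventually (fun n => x n <= X))
  (Htlim : is_lim_seq t p_infty) eps (He : 0 < eps) (HeX : eps * X <= 1/2) :
  eventually (fun n =>
    let S := t n - x n * G (t n) / g1 (t n) in
    0 < G S /\ 0 < G (t n) /\ 0 < g1 S /\ 0 < g1 (t n) /\
    Rabs ((G S / g1 S) / (G (t n) / g1 (t n)) - 1) <= eps * X /\
    Rabs ((ln (G (t n)) - ln (G S)) - x n) <= 2 * eps * X * X).
Proof.
  destruct (ev_bounds t0 G g1 g2 Hg1pos Hg2pos Hq eps He) as [M [HM HMb]].
  assert (HMpos : forall u, M <= u -> 0 < G u) by (intros u Hu; apply (HMb u Hu)).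
  assert (HMd : forall u, M <= u -> Rabs (1 - G u * g2 u / g1 u ^ 2) <= eps)
    by (intros u Hu; apply (HMb u Hu)).
  pose proof (mvt_h t0 G g1 g2 HG Hg Hg1pos M eps HM HMd) as C1.
  pose proof (mvt_lnG t0 G g1 HG Hg1pos M HM HMpos) as C2.
  set (hM := G M / g1 M).
  assert (HhM : 0 < hM).
  { unfold hM. apply Rdiv_lt_0_compat; [apply HMpos; lra | apply Hg1pos; lra]. }
  apply is_lim_seq_spec in Htlim. specialize (Htlim (2 * (M + X * hM) + 1)).
  generalize (filter_and _ _ Htlim HxX). apply filter_imp. intros n [HT Hx].
  cbv zeta.
  set (T := t n) in *. set (xx := x n) in *.
  pose proof (Hxpos n) as Hxx. fold xx in Hxx.
  assert (HMT : M <= T).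
  { assert (0 < X * hM) by nra. lra. }
  assert (HGT : 0 < G T) by (apply HMpos; lra).
  assert (Hg1T : 0 < g1 T) by (apply Hg1pos; lra).
  set (hT := G T / g1 T).
  assert (HhT : 0 < hT) by (apply Rdiv_lt_0_compat; lra).
  replace (T - xx * G T / g1 T) with (T - xx * hT) by (unfold hT; field; lra).
  set (S := T - xx * hT).
  assert (C1a := C1 M T (conj (Rle_refl M) HMT)). fold hT hM in C1a.
  apply Rabs_def2b' in C1a.
  assert (HST : S < T) by (unfold S; nra).
  assert (HMS : M <= S).
  { unfold S.
    assert (xx * hT <= X * hT) by nra.
    assert (X * hT <= X * hM + X * (eps * (T - M))) by nra.
    assert (X * (eps * (T - M)) <= T / 2) by nra.
    lra. }
  assert (HGS : 0 < G S) by (apply HMpos; lra).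
  assert (Hg1S : 0 < g1 S) by (apply Hg1pos; lra).
  set (hS := G S / g1 S).
  assert (HhS : 0 < hS) by (apply Rdiv_lt_0_compat; lra).
  assert (C1b := C1 S T (conj HMS (Rlt_le _ _ HST))). fold hT hS in C1b.
  assert (HTS : T - S = xx * hT) by (unfold S; ring).
  rewrite HTS in C1b.
  assert (Hb1 : Rabs (hT - hS) <= eps * X * hT).
  { assert (0 <= (X - xx) * (eps * hT)) by (apply Rmult_le_pos; nra).
    assert (0 <= (X - xx) * (eps * hT)) by (apply Rmult_le_pos; nra).
    assert (eps * (xx * hT) <= eps * X * hT) by nra. lra. }
  do 4 (split; [assumption|]).
  split.
  { replace (hS / hT - 1) with (- (hT - hS) / hT) by (field; lra).
    unfold Rdiv. rewrite Rabs_mult, Rabs_Ropp, (Rabs_pos_eq (/ hT)).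
    2: { apply Rlt_le, Rinv_0_lt_compat; lra. }
    apply (Rmult_le_reg_r hT); [lra|].
    rewrite Rmult_assoc, Rinv_l by lra. lra. }
  destruct (C2 S T (conj HMS (Rlt_le _ _ HST))) as [c [Hc Hce]].
  rewrite Hce, HTS.
  assert (Hg1c : 0 < g1 c) by (apply Hg1pos; lra).
  assert (HGc : 0 < G c) by (apply HMpos; lra).
  set (hc := G c / g1 c).
  assert (Hhc : 0 < hc) by (apply Rdiv_lt_0_compat; lra).
  assert (C1c := C1 c T (conj (Rle_trans _ _ _ HMS (proj1 Hc)) (proj2 Hc))).
  fold hT hc in C1c.
  assert (Hb2 : Rabs (hT - hc) <= eps * X * hT).
  { assert (eps * (T - c) <= eps * (xx * hT)) by (rewrite <- HTS; nra).
    assert (0 <= (X - xx) * (eps * hT)) by (apply Rmult_le_pos; nra).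
    assert (eps * (xx * hT) <= eps * X * hT) by nra. lra. }
  apply Rabs_def2b' in Hb2.
  assert (Hhc2 : hT / 2 <= hc) by nra.
  replace (xx * hT / hc - xx) with (xx * (hT - hc) / hc) by (field; lra).
  unfold Rdiv. rewrite !Rabs_mult, (Rabs_pos_eq xx), (Rabs_pos_eq (/ hc)) by
    (try apply Rlt_le, Rinv_0_lt_compat; lra).
  apply (Rmult_le_reg_r hc); [lra|].
  rewrite Rmult_assoc, Rinv_l by lra. rewrite Rmult_1_r.
  assert (Rabs (hT - hc) <= eps * X * hT) by (apply Rabs_le; lra).
  assert (0 <= Rabs (hT - hc)) by apply Rabs_pos.
  assert (xx * Rabs (hT - hc) <= X * (eps * X * hT)) by nra.
  assert (0 <= (2 * hc - hT) * (eps * X * X)) by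
    (apply Rmult_le_pos; [lra| apply Rmult_le_pos; [apply Rmult_le_pos|]; lra]).
  assert (X * (eps * X * hT) <= 2 * eps * X * X * hc) by nra.
  lra.
Qed.

Lemma core t0 (G g1 g2 : R -> R) (Ht0 : 0 <= t0)
  (HG : forall u, t0 < u -> is_derive G u (g1 u))
  (Hg : forall u, t0 < u -> is_derive g1 u (g2 u))
  (Hg1pos : forall t, t0 <= t -> 0 < g1 t)
  (Hg2pos : forall t, t0 <= t -> 0 < g2 t)
  (Hq : is_lim (fun t => g1 t ^ 2 / (G t * g2 t)) p_infty 1)
  (t x : nat -> R) (x0 : R) (Hxpos : forall n, 0 < x n)
  (Htlim : is_lim_seq t p_infty) (Hxlim : is_lim_seq x x0) :
  is_lim_seq (fun n => G (t n - x n * G (t n) / g1 (t n)) / G (t n)) (exp (- x0)) /\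
  is_lim_seq (fun n => g1 (t n - x n * G (t n) / g1 (t n)) / g1 (t n)) (exp (- x0)).
Proof.
  set (X := Rabs x0 + 1).
  assert (HX : 0 < X) by (unfold X; pose proof (Rabs_pos x0); lra).
  assert (HxX : eventually (fun n => x n <= X)).
  { pose proof Hxlim as H. apply is_lim_seq_spec in H.
    eapply filter_imp; [|exact (H (mkposreal 1 Rlt_0_1))]. intros n Hn.
    simpl in Hn. unfold X. pose proof (Rle_abs x0). apply Rabs_def2 in Hn. lra. }
  set (S n := t n - x n * G (t n) / g1 (t n)).
  assert (Hk := fun e He HeX => key t0 G g1 g2 Ht0 HG Hg Hg1pos Hg2pos Hq t x X HX Hxpos HxX Htlim e He HeX).
  assert (Hu : is_lim_seq (fun n => ln (G (t n)) - ln (G (S n)) - x n) 0 /\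
               is_lim_seq (fun n => (G (S n) / g1 (S n)) / (G (t n) / g1 (t n))) 1).
  { split; apply is_lim_seq_spec; intros eps;
    set (e := Rmin (/ (2 * X)) (eps / (2 * X * X + X + 1)));
    assert (He : 0 < e) by (apply Rmin_pos; [apply Rinv_0_lt_compat; lra|
       apply Rdiv_lt_0_compat; [apply cond_pos| nra]]);
    assert (HeX : e * X <= 1/2) by
      (assert (e <= / (2 * X)) by apply Rmin_l;
       assert (e * X <= / (2 * X) * X) by nra;
       replace (/ (2 * X) * X) with (1/2) in * by (field; lra); lra);
    assert (He2 : e * (2 * X * X + X + 1) <= eps) by
      (assert (e <= eps / (2 * X * X + X + 1)) by apply Rmin_r;
       assert (0 < 2 * X * X + X + 1) by nra;
       apply (Rmult_le_compat_r (2 * X * X + X + 1)) in H; [|lra];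
       replace (eps / (2 * X * X + X + 1) * (2 * X * X + X + 1)) with (pos eps) in H
         by (field; lra); lra);
    (eapply filter_imp; [|exact (Hk e He HeX)]; intros n Hn).
    - cbv zeta in Hn. destruct Hn as (_&_&_&_&_&Hn). fold (S n) in Hn.
      rewrite Rminus_0_r. assert (0 < e * (X + 1)) by nra. nra.
    - cbv zeta in Hn. destruct Hn as (_&_&_&_&Hn&_). fold (S n) in Hn.
      assert (0 < e * (2 * X * X + 1)) by nra. nra. }
  destruct Hu as [Hu Hv].
  assert (Hpos := Hk (/ (2 * X)) ltac:(apply Rinv_0_lt_compat; lra)
                    ltac:(right; field; lra)).
  assert (HD : is_lim_seq (fun n => exp (- ((ln (G (t n)) - ln (G (S n)) - x n) + x n)))
                 (exp (- x0))).
  { apply (is_lim_seq_continuous exp (fun n => - ((ln (G (t n)) - ln (G (S n)) - x n) + x n))).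
    - apply derivable_continuous_pt, derivable_pt_exp.
    - replace (- x0) with (- (0 + x0)) by ring.
      apply (is_lim_seq_opp _ (0 + x0)).
      apply (is_lim_seq_plus' _ _ 0 x0); assumption. }
  assert (H1 : is_lim_seq (fun n => G (S n) / G (t n)) (exp (- x0))).
  { refine (is_lim_seq_ext_loc _ _ _ _ HD).
    eapply filter_imp; [|exact Hpos]; intros n Hn. cbv zeta in Hn. fold (S n) in Hn. destruct Hn as (HGS&HGT&_).
    replace (- ((ln (G (t n)) - ln (G (S n)) - x n) + x n)) with
      (ln (G (S n)) + - ln (G (t n))) by ring.
    rewrite exp_plus, exp_Ropp, !exp_ln by assumption. reflexivity. }
  split; [exact H1|].
  replace (exp (- x0)) with (exp (- x0) / 1) by field.
  assert (H2 := is_lim_seq_div' _ _ _ _ H1 Hv R1_neq_R0).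
  refine (is_lim_seq_ext_loc _ _ _ _ H2).
  eapply filter_imp; [|exact Hpos]; intros n Hn. cbv zeta in Hn. fold (S n) in Hn. destruct Hn as (HGS&HGT&Hg1S&Hg1T&_).
  cbv beta. set (a := G (S n)) in *. set (b := G (t n)) in *. set (c := g1 (S n)) in *. set (d := g1 (t n)) in *.
  change (a / b / (a / c / (b / d)) = c / d). field. repeat split; apply Rgt_not_eq; assumption.
Qed.
Lemma deriv_int a F F' t : deriv_Ici a F F' -> a < t -> is_derive F t (F' t).
Proof.
  intros H Ht. apply is_derive_Reals. intros eps Heps.
  specialize (H t (Rlt_le _ _ Ht)).
  assert (Hb : locally (F' t) (fun y => Rabs (y - F' t) < eps)).
  { exists (mkposreal eps Heps). intros y Hy. exact Hy. }
  destruct (H _ Hb) as [d Hd].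
  assert (Hp : 0 < Rmin d (t - a)).
  { apply Rmin_pos; [apply cond_pos|lra]. }
  exists (mkposreal _ Hp). intros h Hh0 Hh. simpl in Hh.
  apply Hd.
  - change (Rabs (h - 0) < d). rewrite Rminus_0_r.
    eapply Rlt_le_trans; [exact Hh| apply Rmin_l].
  - split; [exact Hh0|].
    assert (Rabs h < t - a) by (eapply Rlt_le_trans; [exact Hh| apply Rmin_r]).
    apply Rabs_def2 in H0. lra.
Qed.
Theorem lemma2p9
  (f f1 f2 g1 g2 : R -> R) (t0 : R)
  (* f : [0,oo) -> [0,oo), C^1 on [0,oo) with derivative f1 *)
  (Ht0 : 0 <= t0)
  (Hfnn : forall t, 0 <= t -> 0 <= f t)
  (Hf1 : deriv_Ici 0 f f1) (Hf1c : cont_Ici 0 f1)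
  (* f > 0 on [t0,oo), f in C^2([t0,oo)) *)
  (Hfpos : forall t, t0 <= t -> 0 < f t)
  (Hf2 : deriv_Ici t0 f1 f2) (Hf2c : cont_Ici t0 f2)
  (* g = log f on [t0,oo); g1 = g', g2 = g'' on [t0,oo) *)
  (Hg1 : deriv_Ici t0 (fun t => ln (f t)) g1)
  (Hg2 : deriv_Ici t0 g1 g2)
  (* (H1)(i) with q = 1 *)
  (Hg1pos : forall t, t0 <= t -> 0 < g1 t)
  (Hg2pos : forall t, t0 <= t -> 0 < g2 t)
  (Hq : is_lim (fun t => g1 t ^ 2 / (ln (f t) * g2 t)) p_infty 1)
  (Hp : exists p : Rbar, Rbar_lt 0 p /\
          is_lim (fun t => t * g1 t / ln (f t)) p_infty p)
  (* (H1)(ii) *)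
  (Hmono : forall s t, t0 <= s -> s <= t ->
             s * g1 s / ln (f s) <= t * g1 t / ln (f t))
  (Hhat : exists (k : nat) (gh gh1 gh2 : R -> R),
            (1 <= k)%nat /\
            deriv_Ici t0 gh gh1 /\ deriv_Ici t0 gh1 gh2 /\ cont_Ici t0 gh2 /\
            (forall t, t0 <= t -> f t = exp_iter k (gh t)) /\
            (forall s t, t0 <= s -> s <= t -> gh1 t / gh t <= gh1 s / gh s))
  (* sequences *)
  (t x : nat -> R) (x0 : R)
  (Htpos : forall n, 0 < t n) (Hxpos : forall n, 0 < x n) (Hx0 : 0 <= x0)
  (Htlim : is_lim_seq t p_infty) (Hxlim : is_lim_seq x x0) :
  is_lim_seq (fun n => ln (f (t n - x n * ln (f (t n)) / g1 (t n))) / ln (f (t n)))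
    (exp (- x0)) /\
  is_lim_seq (fun n => g1 (t n - x n * ln (f (t n)) / g1 (t n)) / g1 (t n))
    (exp (- x0)).

Proof.
  apply (core t0 (fun u => ln (f u)) g1 g2 Ht0); try assumption.
  - intros u Hu. exact (deriv_int t0 _ _ u Hg1 Hu).
  - intros u Hu. exact (deriv_int t0 _ _ u Hg2 Hu).
Qed.
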